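(* Let $X$ be a locally compact, Hausdorff, second countable space. Then $(\Gamma(X),\tau_{co})$ is a second countable space.
   Context: $\Gamma(X)$ denotes the set of all homeomorphisms $f:\mathrm{dom}(f)\to\mathrm{im}(f)$ between open subsets $\mathrm{dom}(f),\mathrm{im}(f)$ of $X$ (including the empty function $\emptyset$); it is an inverse semigroup under partial composition. The topology $\tau_{co}$ on $\Gamma(X)$ is the topology generated by the subbasic sets $\langle K,V\rangle=\{f\in\Gamma(X): K\subseteq\mathrm{dom}(f)\text{ and } f(K)\subseteq V\}$, where $K$ ranges over compact subsets of $X$ and $V$ over open subsets of $X$. *)

(* Defs.v *)
From HB Require Import structures.
From mathcomp Require Import all_boot all_order all_algebra.
From mathcomp Require Import all_classical all_reals all_analysis.
Set Implicit Arguments. Unset Strict Implicit. Unset Printing Implicit Defensive.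
Local Open Scope classical_set_scope.

Section PartialHomeo.
Context {X : topologicalType}.

(* A partial homeomorphism of X is represented by its graph G : set (X * X).
   G is the graph of a homeomorphism between open subsets U = dom and V = im:
   G = {(x, f x) | x in U} = {(g y, y) | y in V}, with f continuous on U and
   g continuous on V (so f restricted to U and g restricted to V are mutually
   inverse homeomorphisms U <-> V). *)
Definition is_partial_homeo (G : set (X * X)) : Prop :=
  exists (U V : set X) (f g : X -> X),
    [/\ open U /\ open V,
        (forall x y, G (x, y) <-> U x /\ f x = y),
        (forall x y, G (x, y) <-> V y /\ g y = x),
        {within U, continuous f} & {within V, continuous g}].

Definition Gamma : Type := {G : set (X * X) | is_partial_homeo G}.

Definition pdom (f : Gamma) : set X := [set x | exists y, proj1_sig f (x, y)].

Definition co_subbasic (KV : set X * set X) : set Gamma :=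
  [set f | KV.1 `<=` pdom f /\
           (forall x y, KV.1 x -> proj1_sig f (x, y) -> KV.2 y)].

Definition co_index : set (set X * set X) := [set KV | compact KV.1 /\ open KV.2].

End PartialHomeo.

Arguments Gamma : clear implicits.

Definition Gamma_co (X : topologicalType) : Type := Gamma X.

HB.instance Definition _ (X : topologicalType) := gen_eqMixin (Gamma_co X).
HB.instance Definition _ (X : topologicalType) := gen_choiceMixin (Gamma_co X).
HB.instance Definition _ (X : topologicalType) :=
  @isSubBaseTopological.Build (Gamma_co X) (set X * set X)%type
    (@co_index X) (@co_subbasic X).

(* Main.v *)
Require Import Defs.
From HB Require Import structures.
From mathcomp Require Import all_boot all_order all_algebra.
From mathcomp Require Import all_classical all_reals all_analysis.
From mathcomp Require Import finmap.
Local Open Scope classical_set_scope.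

Lemma finI_seq (I : choiceType) T (D : set I) (b : I -> set T) (J : eqType)
  (s : seq J) (h : J -> set T) :
  (forall j, j \in s -> finI_from D b (h j)) ->
  finI_from D b [set t | forall j, j \in s -> h j t].
Proof.
elim: s => [|a s IH] H.
  have -> : [set t | forall j, j \in [::] -> h j t] = setT.
    by apply/seteqP; split => // t _ j.
  by exists fset0 => //; rewrite set_fset0 bigcap_set0.
have -> : [set t | forall j, j \in a :: s -> h j t] =
  h a `&` [set t | forall j, j \in s -> h j t].
  apply/seteqP; split => t /=.
    by move=> Ht; split; [apply: Ht; rewrite inE eqxx | move=> j js; apply: Ht; rewrite inE js orbT].
  by move=> [Ha Hs] j; rewrite inE => /orP [/eqP -> //| /Hs].
apply: finI_fromI; first by apply: H; rewrite inE eqxx.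
by apply: IH => j js; apply: H; rewrite inE js orbT.
Qed.

Lemma cc (X : topologicalType) (K : set X) (I : choiceType) (D : set I) (f : I -> set X) :
  compact K -> (forall i, D i -> open (f i)) -> K `<=` cover D f -> finite_subset_cover D f K.
Proof.
move=> cK hof cov.
case: (pselect (K !=set0)) => [[x0 Kx0]|K0]; last first.
  exists fset0%fset => // k Kk; exfalso; apply: K0; by exists k.
pose Xp : ptopologicalType := HB.pack_for ptopologicalType X (isPointed.Build X x0).
have cK' : @compact Xp K := cK.
move: cK'; rewrite (@compact_cover Xp); apply => //.
Qed.

Section Main.
Variable X : topologicalType.
Variable Bx : set (set X).
Hypothesis hb : basis Bx.
Hypothesis lc : locally_compact [set: X].
Hypothesis hs : hausdorff_space X.

Definition Sfam : set (set X * set X) :=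
  [set (closure p.1, p.2) | p in [set p : set X * set X | Bx p.1 /\ Bx p.2 /\ compact (closure p.1)]].

Lemma Sfam_index : Sfam `<=` @co_index X.
Proof.
move=> _ [[A B] [/= BA [BB cA]] <-]; split => //=.
exact: hb.1.
Qed.

Lemma key (f : Gamma_co X) (K V : set X) : compact K -> open V ->
  co_subbasic (K, V) f ->
  exists G, [/\ finI_from Sfam (@co_subbasic X) G, G f & G `<=` co_subbasic (K, V)].
Proof.
move=> cK oV [/= hK hKV].
case: (proj2_sig f) => U [W [fn [g [[oU oW] hG1 hG2 cf cg]]]].
have H : forall x, exists p : set X * set X, K x ->
  [/\ Bx p.1, Bx p.2, p.1 x, compact (closure p.1) &
     closure p.1 `<=` U] /\ ((forall y, closure p.1 y -> p.2 (fn y)) /\ p.2 `<=` V).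
  move=> x; case: (pselect (K x)) => Kx; last by exists (set0, set0).
  have [y /hG1 [Ux fxy]] := hK x Kx.
  have Vfx : V (fn x) by rewrite fxy; apply: (hKV x y Kx); apply/hG1.
  have [B [BB Bfx] BV] := hb.2 (fn x) V (open_nbhs_nbhs (conj oV Vfx)).
  have cfx : continuous_at x fn.
    by move: cf; rewrite (continuous_open_subspace fn oU); apply; apply/mem_set.
  have nB : nbhs x (fn @^-1` B).
    by apply: cfx; apply: open_nbhs_nbhs; split => //; apply: hb.1.
  have nUB : nbhs x (U `&` fn @^-1` B).
    by apply: filterI => //; apply: open_nbhs_nbhs.
  have [C nC [cC clC]] : compact_near (nbhs x).
    by have := lc x I; rewrite withinET.
  have [N nN clN] := compact_regular hs cC nC nUB.
  have [A [BA Ax] AN] := hb.2 x (N `&` C) (filterI nN nC).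
  exists (A, B) => _; split; [split => //= | split => //=].
  - apply: (subclosed_compact (@closed_closure _ A) cC).
    rewrite [X in _ `<=` X](closure_id C).1 //.
    by apply: closureS => z /AN [].
  - by move=> z /(closureS (fun z (h : A z) => (AN z h).1)) /clN [].
  - by move=> z /(closureS (fun z (h : A z) => (AN z h).1)) /clN [].
have [e He] := choice H.
have oe : forall i, K i -> open (e i).1.
  by move=> i Ki; have [[+ _ _ _ _] _] := He i Ki; apply: hb.1.
have Kcov : K `<=` cover K (fun i => (e i).1).
  by move=> k Kk; exists k => //; have [[]] := He k Kk.
have [D' sD' KD'] : finite_subset_cover K (fun i => (e i).1) K.
  exact: cc cK oe Kcov.
exists [set h | forall x, x \in (D' : seq X) -> co_subbasic (closure (e x).1, (e x).2) h].
split.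
- apply: finI_seq => x xD.
  have [[? ? ? ? ?] [? ?]] := He x (set_mem (sD' x xD)).
  apply: finI_from1; exists (e x) => //.
- move=> x xD; have [[? ? ? ? cU] [cB ?]] := He x (set_mem (sD' x xD)).
  split => /=.
    by move=> y /cU Uy; exists (fn y); apply/hG1.
  by move=> y z /cB Bz /hG1 [_ <-].
- move=> h Hh; split => /=.
    move=> k Kk; have [x xD ek] := KD' k Kk.
    have [+ _] := Hh x xD; apply => /=.
    exact: subset_closure.
  move=> k z Kk hz; have [x xD ek] := KD' k Kk.
  have [[? ? ? ? ?] [? BV]] := He x (set_mem (sD' x xD)).
  apply: BV; have [_ H2] := Hh x xD; apply: (H2 k) => //=.
  exact: subset_closure.
Qed.

Lemma refine_sub (f : Gamma_co X) (s : seq (set X * set X)) :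
  (forall j, j \in s -> co_index j) -> (forall j, j \in s -> co_subbasic j f) ->
  exists G, [/\ finI_from Sfam (@co_subbasic X) G, G f &
    G `<=` [set g | forall j, j \in s -> co_subbasic j g]].
Proof.
elim: s => [|a s IH] Hi Hf.
  exists setT; split; [by exists fset0%fset => //; rewrite set_fset0 bigcap_set0 | by [] | by move=> g _ j].
have [G1 [fG1 G1f G1s]] : exists G, [/\ finI_from Sfam (@co_subbasic X) G, G f
    & G `<=` co_subbasic a].
  have [cK oV] := Hi a (mem_head _ _).
  case: a Hi Hf cK oV => K V Hi Hf cK oV.
  exact: key cK oV (Hf _ (mem_head _ _)).
have [G2 [fG2 G2f G2s]] := IH (fun j js => Hi j (ltac:(by rewrite inE js orbT)))
   (fun j js => Hf j (ltac:(by rewrite inE js orbT))).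
exists (G1 `&` G2); split => //; first exact: finI_fromI.
move=> g [g1 g2] j; rewrite inE => /orP [/eqP -> | js]; first exact: G1s.
exact: G2s.
Qed.

End Main.

Theorem mainTheorem1 (X : topologicalType) :
  locally_compact [set: X] -> hausdorff_space X -> @second_countable X ->
  @second_countable (Gamma_co X).
Proof.
move=> lc hs [Bx cBx hb].
exists (finI_from (@Sfam X Bx) (@co_subbasic X)).
  apply: finI_from_countable.
  apply: (sub_countable (card_image_le _ _)).
  apply: (sub_countable (subset_card_le (B := Bx `*` Bx) _)).
    by move=> p [? [? _]].
  exact: countableX.
split.
  move=> O fO.
  exists [set O]; last exact: bigcup_set1.
  move=> _ ->; case: fO => E sE <-; exists E => //.
  by move=> i /sE /set_mem /(@Sfam_index X Bx hb) h; apply/mem_set.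
move=> f W; rewrite nbhsE; case=> O [oO hOf] OW.
case: oO => D'' sD'' eO.
move: hOf; rewrite -eO; case=> i Di fi; have [E sE iE] := sD'' i Di.
move: fi; rewrite -iE => fi.
have [G [fG Gf Gs]] := @refine_sub X Bx hb lc hs f E (fun j jE => set_mem (sE j jE))
  (fun j jE => fi j jE).
exists G; first by split.
move=> g /Gs Hg; apply: OW; rewrite -eO; exists i => //.
by rewrite -iE; apply: Hg.
Qed.
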